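(* For every $n\in\mathbb{N}$, \[ \sum_{k=1}^{n+1}\frac{2^k}{k}=\frac{n+2}{2}\,{}_3F_2\!\left(1,1,n+3;\,2,2;\,\tfrac12\right)+H_{n+1}-\log 2. \]
   Context: Pochhammer symbol: $(\alpha)_0=1$, $(\alpha)_k=\alpha(\alpha+1)\cdots(\alpha+k-1)$. ${}_3F_2(a,b,c;d,e;z)=\sum_{k\ge0}\frac{(a)_k(b)_k(c)_k}{(d)_k(e)_k}\frac{z^k}{k!}$. $H_n=\sum_{k=1}^{n}\frac1k$. *)

(* Defs.v *)
From Stdlib Require Import Reals Factorial.
Open Scope R_scope.

Fixpoint poch (a : R) (k : nat) : R :=
  match k with
  | O => 1
  | S k' => poch a k' * (a + INR k')
  end.

Definition F32_term (a b c d e z : R) (k : nat) : R :=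
  poch a k * poch b k * poch c k / (poch d k * poch e k) * z ^ k / INR (fact k).

Definition F32_sum (a b c d e z L : R) : Prop :=
  infinite_sum (F32_term a b c d e z) L.

Fixpoint harmonic (n : nat) : R :=
  match n with
  | O => 0
  | S n' => harmonic n' + / INR (S n')
  end.

Fixpoint sum_pow2_over (m : nat) : R :=
  match m with
  | O => 0
  | S m' => sum_pow2_over m' + 2 ^ (S m') / INR (S m')
  end.

(* Main.v *)
Require Import Defs.
From Coquelicot Require Import Coquelicot.
From Stdlib Require Import Reals Lra Lia Factorial.
Open Scope R_scope.

Lemma poch_pos a k : 0 < a -> 0 < poch a k.
Proof. intros Ha; induction k; simpl. lra. apply Rmult_lt_0_compat; auto. pose proof (pos_INR k); lra. Qed.

Lemma poch_shift a k : poch a (S k) = a * poch (a+1) k.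
Proof. induction k. simpl; ring. change (poch a (S (S k))) with (poch a (S k) * (a + INR (S k))).
 rewrite IHk, S_INR. simpl. ring. Qed.

Lemma poch1 k : poch 1 k = INR (fact k).
Proof. induction k. reflexivity. change (poch 1 (S k)) with (poch 1 k * (1 + INR k)).
 change (fact (S k)) with (S k * fact k)%nat. rewrite IHk, mult_INR, S_INR. ring. Qed.

Lemma poch2 k : poch 2 k = INR (fact (S k)).
Proof. replace 2 with (1+1) by ring. rewrite <- (Rmult_1_l (poch (1+1) k)). rewrite <- poch_shift. apply poch1. Qed.

Lemma fact_pos k : 0 < INR (fact k).
Proof. apply lt_0_INR. apply lt_O_fact. Qed.

Lemma is_derive_pd k x : is_derive (fun x => x^(S k)/INR (S k)) x (x^k).
Proof.
  assert (Hk: INR (S k) <> 0) by (apply not_0_INR; lia).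
  evar (l:R). replace (x^k) with l. auto_derive. auto. unfold l.
  reflexivity. unfold l. change (1 * (INR (S k) * x ^ k) * / INR (S k) = x^k). field; auto.
Qed.

Lemma deriv_g N x : x < 1 ->
  derivable_pt_lim (fun x => sum_f_R0 (fun k => x ^ (S k) / INR (S k)) N + ln (1 - x)) x
     (- x ^ (S N) / (1 - x)).
Proof.
  intros Hx. apply is_derive_Reals.
  assert (H: forall N, is_derive (fun x => sum_f_R0 (fun k => x ^ (S k) / INR (S k)) N) x
              (sum_f_R0 (fun k => x ^ k) N)).
  { induction N0.
    - apply is_derive_pd.
    - apply (is_derive_plus (fun x => sum_f_R0 (fun k => x ^ (S k) / INR (S k)) N0) (fun x => x ^ (S (S N0)) / INR (S (S N0)))); auto.
      apply is_derive_pd. }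
  evar (l:R). replace (- x ^ S N / (1 - x)) with l.
  apply (is_derive_plus (fun x => sum_f_R0 (fun k => x ^ (S k) / INR (S k)) N) (fun x => ln (1 - x))).
  apply H. auto_derive. lra. unfold l.
  reflexivity. unfold l, plus; simpl. rewrite tech3 by lra. change ((1 - x ^ S N) / (1 - x) + - (1) * / (1 + - x) = - (x * x ^ N) / (1 - x)). simpl. field. lra.
Qed.


Lemma ln2_bound n : Rabs (sum_f_R0 (fun k => (1/2) ^ (S k) / INR (S k)) n - ln 2) <= (1/2)^(S n).
Proof.
  set (g := fun x => sum_f_R0 (fun k => x ^ (S k) / INR (S k)) n + ln (1 - x)).
  destruct (MVT_cor2 g (fun x => - x ^ (S n) / (1 - x)) 0 (1/2)) as [c [Hc1 Hc2]]. lra.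
  { intros c Hc. apply deriv_g. lra. }
  assert (Hg0 : g 0 = 0).
  { unfold g. replace (1 - 0) with 1 by ring. rewrite ln_1.
    rewrite sum_eq_R0. ring. intros k _. unfold Rdiv. rewrite pow_i by lia. ring. }
  assert (Hg : g (1/2) = sum_f_R0 (fun k => (1/2) ^ (S k) / INR (S k)) n - ln 2).
  { unfold g. replace (1 - 1/2) with (/2) by field. rewrite ln_Rinv by lra. ring. }
  rewrite <- Hg. replace (g (1/2)) with (- c ^ S n / (1 - c) * (1/2 - 0)) by lra.
  assert (H1 : 0 <= c ^ S n <= (1/2)^(S n)).
  { split. apply pow_le; lra. apply pow_incr; lra. }
  rewrite Rabs_left1.
  2:{ assert (0 <= c ^ S n / (1-c) * (1/2)). apply Rmult_le_pos; [apply Rdiv_le_0_compat|]; lra. lra. }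
  apply (Rmult_le_reg_r (2*(1-c))). nra.
  replace (- (- c ^ S n / (1 - c) * (1 / 2 - 0)) * (2 * (1 - c))) with (c ^ S n) by (field; lra).
  nra.
Qed.

Lemma ln2_series : is_series (fun k => (1/2) ^ (S k) / INR (S k)) (ln 2).
Proof.
  apply is_series_Reals. intros eps Heps.
  destruct (pow_lt_1_zero (1/2) ltac:(rewrite Rabs_pos_eq; lra) eps Heps) as [N HN].
  exists N. intros m Hm. unfold R_dist.
  eapply Rle_lt_trans. apply ln2_bound.
  specialize (HN (S m) ltac:(lia)). rewrite Rabs_pos_eq in HN. auto. apply pow_le; lra.
Qed.

Definition cc m k := poch m k / INR (fact k).
Definition aT m k := cc m k * (1/2)^k.
Definition qT m k := aT m k / INR (S k).
Definition gT m k := aT m k / (INR (S k) * INR (S k)).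

Lemma cc_pos m k : 0 < m -> 0 < cc m k.
Proof. intros; unfold cc. apply Rdiv_lt_0_compat. apply poch_pos; auto. apply fact_pos. Qed.

Lemma aT_pos m k : 0 < m -> 0 < aT m k.
Proof. intros; unfold aT. apply Rmult_lt_0_compat. apply cc_pos; auto. apply pow_lt; lra. Qed.

Lemma INRS_pos k : 0 < INR (S k).
Proof. apply lt_0_INR; lia. Qed.

Lemma cc_S m k : cc m (S k) = cc m k * (m + INR k) / INR (S k).
Proof. unfold cc. change (poch m (S k)) with (poch m k * (m + INR k)).
  change (fact (S k)) with (S k * fact k)%nat. rewrite mult_INR.
  field. split. apply Rgt_not_eq, fact_pos. apply Rgt_not_eq, INRS_pos. Qed.

Lemma ex_aT m : 0 < m -> ex_series (aT m).
Proof.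
  intros Hm. apply ex_series_Rabs. apply (ex_series_DAlembert _ (1/2)). lra.
  intros n; apply Rgt_not_eq, aT_pos; auto.
  apply (is_lim_seq_ext (fun n => 1/2 + (m-1)/2 * / INR (S n))).
  { intros n. unfold aT. rewrite cc_S. pose proof (cc_pos m n Hm). pose proof (INRS_pos n).
    pose proof (pos_INR n).
    rewrite Rabs_pos_eq.
    - rewrite S_INR in *. simpl pow. field. split; [lra|]. split. apply pow_nonzero; lra. lra.
    - rewrite S_INR in *. simpl pow.
    - assert (0 < (1/2)^n) by (apply pow_lt; lra). apply Rlt_le. apply Rdiv_lt_0_compat; [|nra]. apply Rmult_lt_0_compat; [|nra]. apply Rdiv_lt_0_compat; nra. }
  assert (Hl : is_lim_seq (fun n => 1/2 + (m-1)/2 * / INR (S n)) (1/2 + (m-1)/2 * 0)).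
  2:{ rewrite Rmult_0_r, Rplus_0_r in Hl. exact Hl. }
  apply is_lim_seq_plus'. apply is_lim_seq_const.
  apply is_lim_seq_mult'. apply is_lim_seq_const.
  apply (is_lim_seq_inv _ p_infty). 
  apply (is_lim_seq_incr_1 INR). apply is_lim_seq_INR. discriminate.
Qed.

Lemma ex_qT m : 0 < m -> ex_series (qT m).
Proof.
  intros Hm. apply (@ex_series_le R_AbsRing R_CompleteNormedModule _ (aT m)); [|apply ex_aT; auto].
  intros n. change (norm (qT m n)) with (Rabs (qT m n)). unfold qT.
  pose proof (aT_pos m n Hm). pose proof (INRS_pos n). pose proof (pos_INR n). rewrite S_INR in *.
  rewrite Rabs_pos_eq. apply (Rmult_le_reg_r (INR n + 1)); auto. unfold Rdiv. rewrite Rmult_assoc, Rinv_l by lra. nra.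
  apply Rlt_le, Rdiv_lt_0_compat; lra.
Qed.

Lemma ex_gT m : 0 < m -> ex_series (gT m).
Proof.
  intros Hm. apply (@ex_series_le R_AbsRing R_CompleteNormedModule _ (aT m)); [|apply ex_aT; auto].
  intros n. change (norm (gT m n)) with (Rabs (gT m n)). unfold gT.
  pose proof (aT_pos m n Hm). pose proof (INRS_pos n). pose proof (pos_INR n). rewrite S_INR in *.
  assert (0 < (INR n + 1) * (INR n + 1)) by nra.
  rewrite Rabs_pos_eq. apply (Rmult_le_reg_r ((INR n + 1) * (INR n + 1))); auto. unfold Rdiv. rewrite Rmult_assoc, Rinv_l by lra. nra.
  apply Rlt_le, Rdiv_lt_0_compat; lra.
Qed.

Lemma series_lin (a b : nat -> R) la lb p q : is_series a la -> is_series b lb ->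
  is_series (fun n => p * a n + q * b n) (p * la + q * lb).
Proof.
  intros Ha Hb. apply (is_series_plus (fun n => scal p (a n)) (fun n => scal q (b n))).
  exact (@is_series_scal R_AbsRing R_NormedModule p a la Ha).
  exact (@is_series_scal R_AbsRing R_NormedModule q b lb Hb).
Qed.

Lemma series_shift (a : nat -> R) l : is_series a l -> is_series (fun k => a (S k)) (l - a O).
Proof. intros H. apply is_series_incr_1. assert (E: l - a O + a O = l) by ring.
  change (is_series a (l - a O + a O)). rewrite E. exact H. Qed.

Lemma cc_rel2 m k : 0 < m -> m * cc (m+1) k - (m-1) * cc m k = INR (S k) * cc m k.
Proof. intros Hm. unfold cc.
  assert (E: m * poch (m+1) k = poch m k * (m + INR k)) by (rewrite <- poch_shift; reflexivity).
  rewrite S_INR. unfold Rdiv. replace (m * (poch (m + 1) k * / INR (fact k))) with (m * poch (m+1) k * / INR (fact k)) by ring.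
  rewrite E. ring. Qed.

Lemma cc_rel1 m k : 0 < m -> cc (m+1) (S k) = cc m (S k) + cc (m+1) k.
Proof. intros Hm. rewrite !cc_S. 
  assert (E: m * cc (m+1) k = cc m k * (m + INR k)).
  { unfold cc. assert (E: m * poch (m+1) k = poch m k * (m + INR k)) by (rewrite <- poch_shift; reflexivity).
    unfold Rdiv. rewrite <- Rmult_assoc, E. ring. }
  pose proof (INRS_pos k). rewrite S_INR in *. apply (Rmult_eq_reg_r (INR k + 1)); [|lra].
  unfold Rdiv. rewrite !Rmult_plus_distr_r. rewrite !Rmult_assoc, !Rinv_l by lra. rewrite !Rmult_1_r.
  rewrite <- E. ring.
Qed.

Definition AA m := Series (aT m).
Definition QQ m := Series (qT m).
Definition GG m := Series (gT m).

Lemma recA m : 0 < m -> AA (m+1) = 2 * AA m.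
Proof.
  intros Hm. unfold AA.
  pose proof (Series_correct _ (ex_aT (m+1) ltac:(lra))) as H1.
  pose proof (Series_correct _ (ex_aT m Hm)) as H0.
  set (L1 := Series (aT (m+1))) in *. set (L0 := Series (aT m)) in *.
  pose proof (series_shift _ _ H1) as S1. pose proof (series_shift _ _ H0) as S0.
  pose proof (series_lin _ _ _ _ 1 (1/2) S0 H1) as S2.
  assert (E: forall k, 1 * aT m (S k) + 1/2 * aT (m+1) k = aT (m+1) (S k)).
  { intros k. unfold aT. rewrite cc_rel1 by auto. simpl pow. ring. }
  apply (is_series_ext _ _ _ E) in S2.
  pose proof (is_series_unique _ _ S1) as U1. pose proof (is_series_unique _ _ S2) as U2.
  assert (a0: forall m, aT m 0 = 1) by (intros; unfold aT, cc; simpl; field).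
  rewrite !a0 in *. lra.
Qed.

Lemma recQ m : 0 < m -> m * QQ (m+1) - (m-1) * QQ m = AA m.
Proof.
  intros Hm. unfold AA, QQ.
  pose proof (Series_correct _ (ex_qT (m+1) ltac:(lra))) as H1.
  pose proof (Series_correct _ (ex_qT m Hm)) as H0.
  pose proof (series_lin _ _ _ _ m (-(m-1)) H1 H0) as S2.
  assert (E: forall k, m * qT (m+1) k + -(m-1) * qT m k = aT m k).
  { intros k. unfold qT, aT. pose proof (cc_rel2 m k Hm) as Hc. pose proof (INRS_pos k).
    transitivity ((m * cc (m+1) k) * (1/2)^k / INR (S k) - (m-1) * cc m k * (1/2)^k / INR (S k)).
    field; lra. replace (m * cc (m+1) k) with (INR (S k) * cc m k + (m-1) * cc m k) by lra. field; lra. }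
  apply (is_series_ext _ _ _ E) in S2. apply is_series_unique in S2. lra.
Qed.

Lemma recG m : 0 < m -> m * GG (m+1) - (m-1) * GG m = QQ m.
Proof.
  intros Hm. unfold GG, QQ.
  pose proof (Series_correct _ (ex_gT (m+1) ltac:(lra))) as H1.
  pose proof (Series_correct _ (ex_gT m Hm)) as H0.
  pose proof (series_lin _ _ _ _ m (-(m-1)) H1 H0) as S2.
  assert (E: forall k, m * gT (m+1) k + -(m-1) * gT m k = qT m k).
  { intros k. unfold gT, qT, aT. pose proof (cc_rel2 m k Hm) as Hc. pose proof (INRS_pos k).
    transitivity ((m * cc (m+1) k) * (1/2)^k / (INR (S k) * INR (S k)) - (m-1) * cc m k * (1/2)^k / (INR (S k) * INR (S k))).
    field; lra. replace (m * cc (m+1) k) with (INR (S k) * cc m k + (m-1) * cc m k) by lra. field; lra. }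
  apply (is_series_ext _ _ _ E) in S2. apply is_series_unique in S2. lra.
Qed.

Lemma cc1 k : cc 1 k = 1.
Proof. unfold cc. rewrite poch1. field. apply Rgt_not_eq, fact_pos. Qed.

Lemma AA1 : AA 1 = 2.
Proof. unfold AA. apply is_series_unique.
  apply (is_series_ext (fun n => (1/2)^n)). { intros k. unfold aT. rewrite cc1. rewrite Rmult_1_l. reflexivity. }
  assert (H := is_series_geom (1/2) ltac:(rewrite Rabs_pos_eq; lra)). replace (/ (1 - 1/2)) with 2 in H by field. exact H. Qed.

Lemma AAi i : AA (INR i + 1) = 2 ^ (S i).
Proof. induction i. simpl INR. rewrite Rplus_0_l, AA1. simpl; ring.
  rewrite S_INR, recA, IHi. simpl; ring. pose proof (pos_INR i); lra. Qed.

Lemma QQ1 : QQ 1 = 2 * ln 2.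
Proof. unfold QQ. apply is_series_unique.
  apply (is_series_ext (fun n => 2 * ((1/2)^(S n) / INR (S n)))).
  { intros; unfold qT, aT; rewrite cc1. simpl pow. match goal with |- ?a = ?b => change (@eq R a b) end. field. apply Rgt_not_eq, INRS_pos. }
  exact (@is_series_scal R_AbsRing R_NormedModule 2 _ _ ln2_series).
Qed.

Lemma QQi i : INR i * QQ (INR i + 1) = 2 ^ (S i) - 2.
Proof. induction i. simpl. ring.
  pose proof (recQ (INR i + 1) ltac:(pose proof (pos_INR i); lra)) as H.
  rewrite AAi in H. rewrite S_INR. replace (INR i + 1 - 1) with (INR i) in H by ring.
  simpl pow in *. lra. Qed.

Lemma GGi n : INR (S n) * GG (INR (S n) + 1) = 2 * ln 2 + 2 * sum_pow2_over n - 2 * harmonic n.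
Proof. induction n.
  - pose proof (recG 1 ltac:(lra)) as H. rewrite QQ1 in H. simpl sum_pow2_over; simpl harmonic.
    simpl INR. lra.
  - pose proof (recG (INR (S n) + 1) ltac:(pose proof (pos_INR (S n)); lra)) as H.
    pose proof (QQi (S n)) as HQ. pose proof (INRS_pos n) as Hp.
    replace (INR (S n) + 1 - 1) with (INR (S n)) in H by ring.
    rewrite (S_INR (S n)). 
    change (sum_pow2_over (S n)) with (sum_pow2_over n + 2 ^ (S n) / INR (S n)).
    change (harmonic (S n)) with (harmonic n + / INR (S n)).
    assert (QQ (INR (S n) + 1) = (2 ^ S (S n) - 2) / INR (S n)).
    { apply (Rmult_eq_reg_l (INR (S n))). rewrite HQ. field. lra. lra. }
    rewrite H0 in H. simpl pow in *. 
    replace (2 * ln 2 + 2 * (sum_pow2_over n + 2 * 2 ^ n / INR (S n)) - 2 * (harmonic n + / INR (S n)))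
      with (INR (S n) * GG (INR (S n) + 1) + (2 * (2 * 2 ^ n) - 2) / INR (S n)) by (rewrite IHn; field; lra).
    lra.
Qed.

Theorem mainTheorem15 : forall n : nat,
  exists F : R,
    F32_sum 1 1 (INR n + 3) 2 2 (1/2) F /\
    sum_pow2_over (S n) = (INR n + 2) / 2 * F + harmonic (S n) - ln 2.
Proof.
  intros n. exists (GG (INR n + 3)). split.
  - unfold F32_sum. apply is_series_Reals.
    apply (is_series_ext (gT (INR n + 3))).
    { intros k. unfold gT, aT, cc, F32_term. rewrite !poch1, !poch2.
      change (fact (S k)) with (S k * fact k)%nat. rewrite mult_INR.
      pose proof (fact_pos k). pose proof (INRS_pos k). match goal with |- ?a = ?b => change (@eq R a b) end. field. lra. }
    apply Series_correct, ex_gT. pose proof (pos_INR n); lra.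
  - pose proof (GGi (S n)) as H. rewrite !S_INR in H.
    replace (INR n + 1 + 1 + 1) with (INR n + 3) in H by ring.
    replace (INR n + 1 + 1) with (INR n + 2) in H by ring. lra.
Qed.
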